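(* Let $n=|V|\ge4$ and let $G$ be a relationship network on $V$ satisfying structural balance, known to the designer. Then there exists a valid mechanism that is efficient and DSIC if and only if either $G$ has exactly one F-component (i.e. all pairs of agents are friends) or $G$ has at least three EF-components.
   Context: A relationship network on $V=\{1,\dots,n\}$ assigns to every unordered pair of distinct agents exactly one of the symmetric relations friends, enemies, impartial; $F_i,E_i,I_i$ denote the friends, enemies, impartials of $i$. Structural balance: for all pairwise distinct $i,j,k$: $j\in F_i, k\in F_j\Rightarrow k\in F_i$; $j\in E_i,k\in E_j\Rightarrow k\in F_i$; $j\in E_i,k\in F_j\Rightarrow k\in E_i$. An EF-component is a connected component of the graph whose edges are friend or enemy pairs; an F-component is a connected component of the graph whose edges are friend pairs. Preferences: fix $w_f,w_e>0$; $p\succ_i p'$ iff $p_i>p'_i$, or $p_i=p'_i$ and $w_f\sum_{j\in F_i}(p_j-p'_j)-w_e\sum_{j\in E_i}(p_j-p'_j)>0$; $p\succsim_ip'$ means not $p'\succ_ip$. Known-network setting: each agent $i$ sends a message $m_i\subseteq V$ (the agents it reports as needy). A mechanism is $g:(2^V)^V\to[0,1]^V$ (it may depend on the known network); it is valid if $\sum_ig_i(\mathbf m)\le1$ for all $\mathbf m$; DSIC if for all $i$, all profiles $\mathbf m$ and all $m'_i\subseteq V$, $g(\mathbf m)\succsim_i g(m'_i,\mathbf m_{-i})$; efficient if for every nonempty $N\subseteq V$, at the truthful profile $m_j=N$ for all $j$, $\sum_{i\in N}g_i(\mathbf m)=1$. *)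

(* Defs.v *)
(* reals as an abstract realType (all realTypes are isomorphic to R). *)
From HB Require Import structures.
From mathcomp Require Import all_boot all_order all_algebra.
From mathcomp Require Import reals.
Set Implicit Arguments. Unset Strict Implicit. Unset Printing Implicit Defensive.
Import Order.TTheory GRing.Theory Num.Theory.
Local Open Scope ring_scope.

Inductive relation3 := Friends | Enemies | Impartial.

Definition is_friend (r : relation3) : bool :=
  match r with Friends => true | _ => false end.
Definition is_enemy (r : relation3) : bool :=
  match r with Enemies => true | _ => false end.

(* A relationship network on V = 'I_n: G i j is the relation between i and j
   (only meaningful for i <> j). *)
Definition network (n : nat) := 'I_n -> 'I_n -> relation3.

Definition net_symmetric n (G : network n) : Prop :=
  forall i j : 'I_n, i != j -> G i j = G j i.

Definition structurally_balanced n (G : network n) : Prop :=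
  forall i j k : 'I_n, i != j -> j != k -> i != k ->
    (G i j = Friends -> G j k = Friends -> G i k = Friends) /\
    (G i j = Enemies -> G j k = Enemies -> G i k = Friends) /\
    (G i j = Enemies -> G j k = Friends -> G i k = Enemies).

Definition friends n (G : network n) (i : 'I_n) : {set 'I_n} :=
  [set j | (j != i) && is_friend (G i j)].
Definition enemies n (G : network n) (i : 'I_n) : {set 'I_n} :=
  [set j | (j != i) && is_enemy (G i j)].

Definition F_edge n (G : network n) : rel 'I_n :=
  fun i j => (i != j) && is_friend (G i j).
Definition EF_edge n (G : network n) : rel 'I_n :=
  fun i j => (i != j) && (is_friend (G i j) || is_enemy (G i j)).

Definition num_components n (e : rel 'I_n) : nat :=
  #|[set [set y | connect e x y] | x : 'I_n]|.

Definition num_F_components n (G : network n) := num_components (F_edge G).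
Definition num_EF_components n (G : network n) := num_components (EF_edge G).

Definition profile n := {ffun 'I_n -> {set 'I_n}}.
Definition mechanism (R : realType) n := profile n -> 'I_n -> R.

Definition spref (R : realType) n (wf we : R) (G : network n) (i : 'I_n)
    (p p' : 'I_n -> R) : Prop :=
  p' i < p i \/
  (p i = p' i /\
   0 < wf * (\sum_(j in friends G i) (p j - p' j))
       - we * (\sum_(j in enemies G i) (p j - p' j))).

Definition wpref (R : realType) n (wf we : R) (G : network n) (i : 'I_n)
    (p p' : 'I_n -> R) : Prop := ~ spref wf we G i p' p.

Definition deviate n (m : profile n) (i : 'I_n) (mi : {set 'I_n}) : profile n :=
  [ffun j => if j == i then mi else m j].

Definition valid (R : realType) n (g : mechanism R n) : Prop :=
  (forall m i, 0 <= g m i <= 1) /\ (forall m, \sum_(i < n) g m i <= 1).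

Definition DSIC (R : realType) n (wf we : R) (G : network n) (g : mechanism R n) : Prop :=
  forall (i : 'I_n) (m : profile n) (mi : {set 'I_n}),
    wpref wf we G i (g m) (g (deviate m i mi)).

Definition efficient (R : realType) n (g : mechanism R n) : Prop :=
  forall N : {set 'I_n}, N != set0 ->
    \sum_(i in N) g [ffun _ => N] i = 1.

(* Main.v *)
Require Import Defs.
From HB Require Import structures.
From mathcomp Require Import all_boot all_order all_algebra.
From mathcomp Require Import reals.
From mathcomp Require Import ring lra.
Import Order.TTheory GRing.Theory Num.Theory.
Local Open Scope ring_scope.
Set Implicit Arguments. Unset Strict Implicit.

Lemma dsic_eq (R : realType) n (wf we : R) (G : network n) (g : mechanism R n) :
  DSIC wf we G g -> forall i m mi,
  g (deviate m i mi) i = g m i /\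
  wf * (\sum_(j in friends G i) g (deviate m i mi) j) - we * (\sum_(j in enemies G i) g (deviate m i mi) j)
  = wf * (\sum_(j in friends G i) g m j) - we * (\sum_(j in enemies G i) g m j).
Proof.
move=> hD i m mi.
set m' := deviate m i mi.
have hm : deviate m' i (m i) = m.
  by apply/ffunP=> k; rewrite /m' /deviate !ffunE; case: eqP => [->|].
have h1 := hD i m mi. have h2 := hD i m' (m i). rewrite hm in h2.
rewrite /wpref /spref -/m' in h1 h2.
have e1 : g m' i = g m i.
  apply/eqP; rewrite eq_le; apply/andP; split; rewrite leNgt; apply/negP => h.
  - by apply: h1; left.
  - by apply: h2; left.
split=> //.
rewrite !sumrB in h1 h2.
set A' := \sum_(j in friends G i) g m' j in h1 h2 *.
set A := \sum_(j in friends G i) g m j in h1 h2 *.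
set B' := \sum_(j in enemies G i) g m' j in h1 h2 *.
set B := \sum_(j in enemies G i) g m j in h1 h2 *.
have k1 : ~~ (0 < wf * (A' - A) - we * (B' - B)) by apply/negP => h; apply: h1; right.
have k2 : ~~ (0 < wf * (A - A') - we * (B - B')) by apply/negP => h; apply: h2; right.
rewrite -leNgt in k1. rewrite -leNgt in k2.
lra.
Qed.
Lemma invariance_seq (R : realType) n (Phi : profile n -> R) (s : seq 'I_n) :
  (forall i, i \in s -> forall m mi, Phi (deviate m i mi) = Phi m) ->
  forall m m' : profile n, (forall x, x \notin s -> m x = m' x) -> Phi m = Phi m'.
Proof.
elim: s => [|i s IH] hinv m m' hag.
  by congr Phi; apply/ffunP => x; apply: hag.
have -> : Phi m = Phi (deviate m i (m' i)).
  by rewrite hinv // mem_head.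
apply: IH.
  by move=> j js; apply: hinv; rewrite in_cons js orbT.
move=> x xs; rewrite /deviate ffunE; case: eqP => [->//|/eqP xi].
by apply: hag; rewrite in_cons negb_or xi xs.
Qed.

Lemma invariance (R : realType) n (Phi : profile n -> R) (S : {set 'I_n}) :
  (forall i, i \in S -> forall m mi, Phi (deviate m i mi) = Phi m) ->
  forall m m' : profile n, (forall x, x \notin S -> m x = m' x) -> Phi m = Phi m'.
Proof.
move=> hinv m m' hag; apply: (@invariance_seq R n Phi (enum S)).
  by move=> i; rewrite mem_enum; apply: hinv.
by move=> x; rewrite mem_enum; apply: hag.
Qed.

Lemma sum_subset (R : realType) n (f : 'I_n -> R) (S T : {set 'I_n}) :
  (forall j, 0 <= f j) -> S \subset T -> \sum_(j in S) f j <= \sum_(j in T) f j.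
Proof.
move=> h0 sST; rewrite [X in X <= _]big_mkcond [X in _ <= X]big_mkcond /=.
apply: ler_sum => j _; case: ifP => jS.
  by rewrite (subsetP sST _ jS).
by case: ifP.
Qed.

Lemma sum_disj (R : realType) n (f : 'I_n -> R) (S T : {set 'I_n}) :
  (forall j, 0 <= f j) -> [disjoint S & T] ->
  \sum_(j in S) f j + \sum_(j in T) f j <= \sum_j f j.
Proof.
move=> h0 dST; rewrite [X in X + _]big_mkcond [X in _ + X]big_mkcond -big_split /=.
apply: ler_sum => j _; case: ifP => jS; case: ifP => jT.
- by move: (disjointFr dST jS); rewrite jT.
- by rewrite addr0.
- by rewrite add0r.
- by rewrite addr0.
Qed.
Lemma nsym {T : eqType} {x y : T} : x != y -> y != x.
Proof. by rewrite eq_sym. Qed.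

Definition rmul (r s : relation3) : relation3 :=
  match r, s with
  | Friends, Friends => Friends | Enemies, Enemies => Friends
  | Friends, Enemies => Enemies | Enemies, Friends => Enemies
  | _, _ => Impartial end.
Definition rflip (r : relation3) : relation3 :=
  match r with Friends => Enemies | Enemies => Friends | Impartial => Impartial end.

Lemma tri n (G : network n) : net_symmetric G -> structurally_balanced G ->
  forall x y z : 'I_n, x != y -> y != z -> x != z ->
  G x y <> Impartial -> G y z <> Impartial -> G x z = rmul (G x y) (G y z).
Proof.
move=> hs hb x y z xy yz xz.
have [h1 [h2 h3]] := hb x y z xy yz xz.
have [k1 [k2 k3]] := hb z y x (nsym yz) (nsym xy) (nsym xz).
case e1: (G x y) => //; case e2: (G y z) => // _ _ /=.
- exact: h1.
- rewrite hs //; apply: k3; first by rewrite hs ?e2 // nsym.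
  by rewrite hs ?e1 // nsym.
- exact: h3.
- exact: h2.
Qed.

Lemma friend_same n (G : network n) : net_symmetric G -> structurally_balanced G ->
  forall a b j : 'I_n, a != b -> j != a -> j != b -> G a b = Friends -> G b j = G a j.
Proof.
move=> hs hb a b j ab ja jb eab.
have eba : G b a = Friends by rewrite (hs b a (nsym ab)).
case e: (G a j).
- by rewrite (tri hs hb (nsym ab) (nsym ja) (nsym jb)) ?eba ?e.
- by rewrite (tri hs hb (nsym ab) (nsym ja) (nsym jb)) ?eba ?e.
- case e2: (G b j) => //.
  + by move: (tri hs hb ab (nsym jb) (nsym ja)); rewrite eab e2 e => /(_ _ _) [].
  + by move: (tri hs hb ab (nsym jb) (nsym ja)); rewrite eab e2 e => /(_ _ _) [].
Qed.

Lemma enemy_flip n (G : network n) : net_symmetric G -> structurally_balanced G ->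
  forall a b j : 'I_n, a != b -> j != a -> j != b -> G a b = Enemies -> G b j = rflip (G a j).
Proof.
move=> hs hb a b j ab ja jb eab.
have eba : G b a = Enemies by rewrite (hs b a (nsym ab)).
case e: (G a j).
- by rewrite (tri hs hb (nsym ab) (nsym ja) (nsym jb)) ?eba ?e.
- by rewrite (tri hs hb (nsym ab) (nsym ja) (nsym jb)) ?eba ?e.
- case e2: (G b j) => //.
  + by move: (tri hs hb ab (nsym jb) (nsym ja)); rewrite eab e2 e => /(_ _ _) [].
  + by move: (tri hs hb ab (nsym jb) (nsym ja)); rewrite eab e2 e => /(_ _ _) [].
Qed.
Definition Kset n (G : network n) (a : 'I_n) : {set 'I_n} := a |: friends G a.

Lemma inK n (G : network n) a x :
  (x \in Kset G a) = (x == a) || (x != a) && is_friend (G a x).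
Proof. by rewrite !inE. Qed.
Lemma inE' n (G : network n) a x :
  (x \in enemies G a) = (x != a) && is_enemy (G a x).
Proof. by rewrite !inE. Qed.
Lemma inF' n (G : network n) a x :
  (x \in friends G a) = (x != a) && is_friend (G a x).
Proof. by rewrite !inE. Qed.

Lemma is_friendP r : is_friend r -> r = Friends. Proof. by case: r. Qed.
Lemma is_enemyP r : is_enemy r -> r = Enemies. Proof. by case: r. Qed.

Lemma L1 n (G : network n) : net_symmetric G -> structurally_balanced G ->
  forall a i, i \in Kset G a -> friends G i = Kset G a :\ i.
Proof.
move=> hs hb a i; rewrite inK; case: (eqVneq i a) => [->|ia] /= hi.
  apply/setP => j; rewrite !inE; case: (eqVneq j a) => //.
have eai := is_friendP hi.
apply/setP => j; rewrite inF' !inE; case: (eqVneq j i) => [//|ji] /=.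
case: (eqVneq j a) => [->|ja] /=.
  by rewrite (hs i a ia) eai.
by rewrite (friend_same hs hb (nsym ia) ja ji eai).
Qed.

Lemma L2 n (G : network n) : net_symmetric G -> structurally_balanced G ->
  forall a i, i \in Kset G a -> enemies G i = enemies G a.
Proof.
move=> hs hb a i; rewrite inK; case: (eqVneq i a) => [->//|ia] /= hi.
have eai := is_friendP hi.
apply/setP => j; rewrite !inE'; case: (eqVneq j i) => [->|ji] /=.
  by rewrite ia eai.
case: (eqVneq j a) => [->|ja] /=.
  by rewrite (hs i a ia) eai.
by rewrite (friend_same hs hb (nsym ia) ja ji eai).
Qed.

Lemma L3 n (G : network n) : net_symmetric G -> structurally_balanced G ->
  forall a i, i \in enemies G a -> friends G i = enemies G a :\ i.
Proof.
move=> hs hb a i; rewrite inE' => /andP[ia hi].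
have eai := is_enemyP hi.
apply/setP => j; rewrite inF' !inE; case: (eqVneq j i) => [//|ji] /=.
case: (eqVneq j a) => [->|ja] /=.
  by rewrite (hs i a ia) eai.
by rewrite (enemy_flip hs hb (nsym ia) ja ji eai); case: (G a j).
Qed.

Lemma L4 n (G : network n) : net_symmetric G -> structurally_balanced G ->
  forall a i, i \in enemies G a -> enemies G i = Kset G a.
Proof.
move=> hs hb a i; rewrite inE' => /andP[ia hi].
have eai := is_enemyP hi.
apply/setP => j; rewrite inE' inK; case: (eqVneq j i) => [->|ji] /=.
  by rewrite (negbTE ia) eai.
case: (eqVneq j a) => [->|ja] /=.
  by rewrite (hs i a ia) eai.
by rewrite (enemy_flip hs hb (nsym ia) ja ji eai); case: (G a j).
Qed.

Lemma KE_disj n (G : network n) a : [disjoint Kset G a & enemies G a].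
Proof.
apply/pred0P => x /=; rewrite inK inE'; case: (eqVneq x a) => //= _.
by case: (G a x).
Qed.

Lemma a_in_K n (G : network n) a : a \in Kset G a.
Proof. by rewrite inK eqxx. Qed.

Lemma connect_ind' (T : finType) (e : rel T) (P : pred T) x y :
  P x -> (forall u v, e u v -> P u -> P v) -> connect e x y -> P y.
Proof.
move=> Px cl /connectP[p ep ->]; elim: p x Px ep => //= z p IH x Px /andP[exz ep].
exact: IH (cl _ _ exz Px) ep.
Qed.

Lemma connect_KE n (G : network n) : net_symmetric G -> structurally_balanced G ->
  forall a x, connect (EF_edge G) a x -> x \in Kset G a :|: enemies G a.
Proof.
move=> hs hb a x; apply: (@connect_ind' _ _ (fun y => y \in Kset G a :|: enemies G a)); first by rewrite in_setU a_in_K.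
move=> u v /andP[uv huv]; rewrite !inE.
case: (eqVneq v a) => [//|va] /=.
case: (eqVneq u a) => [eua|ua] /=.
  by rewrite -eua.
move=> hu.
have ne1 : G a u <> Impartial by move: hu; case: (G a u).
have ne2 : G u v <> Impartial by move: huv; case: (G u v).
rewrite (tri hs hb (nsym ua) uv (nsym va) ne1 ne2).
by case: (G a u) ne1; case: (G u v) ne2.
Qed.

Lemma K_connect n (G : network n) a x : x \in Kset G a -> connect (EF_edge G) a x.
Proof.
rewrite inK; case: (eqVneq x a) => [->|xa] /= h; first exact: connect0.
apply: connect1; rewrite /EF_edge (nsym xa) /=; by rewrite h.
Qed.

Definition Xs (R : realType) n (g : mechanism R n) (m : profile n) (S : {set 'I_n}) :=
  \sum_(j in S) g m j.

Lemma EF_sym n (G : network n) : net_symmetric G -> symmetric (EF_edge G).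
Proof.
move=> hs i j; rewrite /EF_edge; case: (eqVneq i j) => [->//|ij].
by rewrite (hs i j ij).
Qed.

Lemma impossibility (R : realType) (wf we : R) n (G : network n) (g : mechanism R n) :
  0 < wf -> 0 < we -> net_symmetric G -> structurally_balanced G ->
  valid g -> efficient g -> DSIC wf we G g ->
  forall a d : 'I_n,
  ((~~ connect (EF_edge G) a d /\ forall x, connect (EF_edge G) a x || connect (EF_edge G) d x)
   \/ (d \in enemies G a /\ forall x, connect (EF_edge G) a x)) -> False.
Proof.
move=> hwf hwe hs hb [hv hsum] heff hD.
have g0 : forall m j, 0 <= g m j by move=> m j; case/andP: (hv m j).
have X0 : forall m S, 0 <= Xs g m S by move=> m S; apply: sumr_ge0 => j _.
have Xdisj : forall m (S T : {set 'I_n}), [disjoint S & T] -> Xs g m S + Xs g m T <= 1.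
  move=> m S T dST; apply: le_trans (hsum m); exact: sum_disj.
pose Phi a m := wf * Xs g m (Kset G a) - we * Xs g m (enemies G a).
pose Psi a m := wf * Xs g m (enemies G a) - we * Xs g m (Kset G a).
have Phi_inv : forall a i, i \in Kset G a -> forall m mi, Phi a (deviate m i mi) = Phi a m.
  move=> a i iK m mi; have [e1 e2] := dsic_eq hD i m mi.
  rewrite /Phi /Xs !(big_setD1 _ iK) -(L1 hs hb iK) -(L2 hs hb iK) e1.
  by rewrite !mulrDr -!addrA e2.
have Psi_inv : forall a i, i \in enemies G a -> forall m mi, Psi a (deviate m i mi) = Psi a m.
  move=> a i iE m mi; have [e1 e2] := dsic_eq hD i m mi.
  rewrite /Psi /Xs !(big_setD1 _ iE) -(L3 hs hb iE) -(L4 hs hb iE) e1.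
  by rewrite !mulrDr -!addrA e2.
have ruleS : forall a (m ms : profile n), (forall x, x \notin Kset G a -> m x = ms x) ->
    1 <= Xs g ms (Kset G a) -> 1 <= Xs g m (Kset G a).
  move=> a m ms hag h1.
  have eq := invariance (Phi_inv a) hag.
  have d1 := Xdisj ms _ _ (KE_disj G a).
  have d2 := X0 m (enemies G a). have d3 := X0 ms (enemies G a).
  move: eq; rewrite /Phi => eq.
  nra.
have ruleS' : forall a (m ms : profile n), (forall x, x \notin enemies G a -> m x = ms x) ->
    1 <= Xs g ms (Kset G a) -> 1 <= Xs g m (Kset G a).
  move=> a m ms hag h1.
  have eq := invariance (Psi_inv a) hag.
  have d1 := Xdisj ms _ _ (KE_disj G a).
  have d2 := X0 m (enemies G a). have d3 := X0 ms (enemies G a).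
  move: eq; rewrite /Psi => eq.
  nra.
have truth : forall a, 1 <= Xs g [ffun _ => [set a]] (Kset G a).
  move=> a; have ne : [set a] != set0 by apply/set0Pn; exists a; exact: set11.
  have := heff [set a] ne => e1.
  rewrite -e1; apply: sum_subset => //; by rewrite sub1set a_in_K.
have side : forall a (m : profile n),
    (forall x, ~~ connect (EF_edge G) a x -> m x = [set a]) -> 1 <= Xs g m (Kset G a).
  move=> a m hm.
  pose mK : profile n := [ffun x => if x \in Kset G a then [set a] else m x].
  have h1 : 1 <= Xs g mK (Kset G a).
    apply: (ruleS' a mK [ffun _ => [set a]]) (truth a) => x xE; rewrite !ffunE.
    case: ifP => // xK; apply: hm; apply/negP => c.
    by have := connect_KE hs hb c; rewrite in_setU xK (negbTE xE).
  by apply: (ruleS a m mK) h1 => x xK; rewrite ffunE (negbTE xK).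
have csym := sym_connect_sym (EF_sym hs).
move=> a d [[nad hall] | [dE hall]].
- pose Q : profile n := [ffun x => if connect (EF_edge G) a x then [set d] else [set a]].
  have hA : 1 <= Xs g Q (Kset G a).
    by apply: side => x nx; rewrite ffunE (negbTE nx).
  have hDd : 1 <= Xs g Q (Kset G d).
    apply: side => x nx; rewrite ffunE.
    by move: (hall x); rewrite (negbTE nx) orbF => ->.
  have dis : [disjoint Kset G a & Kset G d].
    apply/pred0P => x /=; apply/negbTE/negP => /andP[xa xd]; move/negP: nad; apply.
    apply: connect_trans (K_connect xa) _; by rewrite csym; apply: K_connect.
  have := Xdisj Q _ _ dis; lra.
- pose Q : profile n := [ffun x => if x \in Kset G a then [set d] else [set a]].
  have hA : 1 <= Xs g Q (Kset G a).
    by apply: (ruleS a Q [ffun _ => [set a]]) (truth a) => x xK; rewrite !ffunE (negbTE xK).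
  have KdE : Kset G d = enemies G a.
    by rewrite /Kset (L3 hs hb dE) setD1K.
  have hDd : 1 <= Xs g Q (Kset G d).
    apply: (ruleS d Q [ffun _ => [set d]]) (truth d) => x xK; rewrite !ffunE.
    have := connect_KE hs hb (hall x); rewrite in_setU -KdE (negbTE xK) orbF => ->.
    done.
  have dis : [disjoint Kset G a & Kset G d] by rewrite KdE; exact: KE_disj.
  have := Xdisj Q _ _ dis; lra.
Qed.

Definition cls n (e : rel 'I_n) (x : 'I_n) : {set 'I_n} := [set y | connect e x y].

Lemma cls_in n (e : rel 'I_n) x : cls e x \in [set [set y | connect e x y] | x : 'I_n].
Proof. by apply/imsetP; exists x. Qed.

Lemma cls_eq n (e : rel 'I_n) x y : cls e x = cls e y -> connect e x y.
Proof. move=> h; have hy : y \in cls e y by rewrite inE connect0. by move: hy; rewrite -h inE. Qed.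

Lemma C1 n (e : rel 'I_n) : num_components e = 1%N -> forall x y, connect e x y.
Proof.
rewrite /num_components => /eqP/cards1P [S hS] x y; apply: cls_eq.
have hx := cls_in e x; have hy := cls_in e y.
rewrite hS !in_set1 in hx hy.
by rewrite (eqP hx) (eqP hy).
Qed.

Lemma C2 n (e : rel 'I_n) (x0 : 'I_n) : (forall x y, connect e x y) -> num_components e = 1%N.
Proof.
move=> hc; apply/eqP/cards1P; exists setT; apply/setP => S; rewrite in_set1.
apply/imsetP/eqP => [[x _ ->]|->].
  by apply/setP => y; rewrite !inE hc.
by exists x0 => //; apply/setP => y; rewrite !inE hc.
Qed.

Lemma C3 n (e : rel 'I_n) : (num_components e <= 2)%N ->
  forall x y z, [|| connect e x y, connect e y z | connect e x z].
Proof.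
move=> h2 x y z; apply/negPn/negP; rewrite !negb_or => /and3P[nxy nyz nxz].
have d1 : cls e x != cls e y by apply/negP => /eqP/cls_eq; apply/negP.
have d2 : cls e y != cls e z by apply/negP => /eqP/cls_eq; apply/negP.
have d3 : cls e x != cls e z by apply/negP => /eqP/cls_eq; apply/negP.
have sub : [set cls e x; cls e y; cls e z] \subset [set [set y | connect e x y] | x : 'I_n].
  by apply/subsetP => S; rewrite !inE => /orP[/orP[]|] /eqP ->; apply: cls_in.
have := subset_leq_card sub.
rewrite -/(num_components e).
have -> : [set cls e x; cls e y; cls e z] = cls e x |: [set cls e y; cls e z].
  by apply/setP => S; rewrite !inE orbA.
rewrite cardsU1 cards2 in_set2 (negbTE d1) (negbTE d3) d2 /=.
by move=> h3; move: (leq_trans h3 h2).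
Qed.

Lemma C4 n (e : rel 'I_n) : connect_sym e -> (3 <= num_components e)%N ->
  exists a1 a2 a3, [&& ~~ connect e a1 a2, ~~ connect e a2 a3 & ~~ connect e a1 a3].
Proof.
move=> cs; rewrite /num_components; set S := [set _ | _ : 'I_n] => h3.
have : (0 < #|S|)%N by apply: leq_trans h3.
case/card_gt0P => c1 c1S.
have h2 : (1 < #|S :\ c1|)%N by move: h3; rewrite (cardsD1 c1) c1S.
have : (0 < #|S :\ c1|)%N by apply: leq_trans h2.
case/card_gt0P => c2 c2S.
have h1 : (0 < #|S :\ c1 :\ c2|)%N by move: h2; rewrite (cardsD1 c2 (S :\ c1)) c2S.
case/card_gt0P: h1 => c3 c3S.
move: c3S c2S; rewrite !inE => /and3P[n32 n31 c3S'] /andP[n21 c2S'].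
case/imsetP: c1S => a1 _ e1; case/imsetP: c2S' => a2 _ e2; case/imsetP: c3S' => a3 _ e3.
have key : forall u v, connect e u v -> [set y | connect e u y] = [set y | connect e v y].
  by move=> u v huv; apply/setP => w; rewrite !inE (same_connect cs huv).
exists a1, a2, a3; apply/and3P; split; apply/negP => /key.
- by move=> h; move/eqP: n21; apply; rewrite e1 e2 h.
- by move=> h; move/eqP: n32; apply; rewrite e2 e3 h.
- by move=> h; move/eqP: n31; apply; rewrite e1 e3 h.
Qed.

Definition share (R : realType) n (j : 'I_n) (N : {set 'I_n}) : R :=
  if j \in N then (#|N|%:R)^-1 else 0.

Lemma share_ge0 (R : realType) n (j : 'I_n) N : 0 <= share R j N.
Proof. by rewrite /share; case: ifP => // _; rewrite invr_ge0 ler0n. Qed.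

Lemma share_le1 (R : realType) n (j : 'I_n) N : share R j N <= 1.
Proof.
rewrite /share; case: ifP => // jN.
have h : (1 <= #|N|)%N by apply/card_gt0P; exists j.
rewrite invr_le1 ?ler1n // ?unitfE ?pnatr_eq0 -?lt0n //.
by rewrite ltr0n.
Qed.

Lemma sum_share_in (R : realType) n (N : {set 'I_n}) : N != set0 ->
  \sum_(j in N) share R j N = 1.
Proof.
move=> hN; rewrite (eq_bigr (fun _ => (#|N|%:R)^-1)); last first.
  by move=> j jN; rewrite /share jN.
rewrite sumr_const -[LHS]mulr_natl mulfV // pnatr_eq0 -lt0n card_gt0 //.
Qed.

Lemma sum_share_all (R : realType) n (N : {set 'I_n}) :
  \sum_j share R j N <= 1.
Proof.
have -> : \sum_j share R j N = \sum_(j in N) share R j N.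
  by rewrite [RHS]big_mkcond /=; apply: eq_bigr => j _; rewrite /share; case: ifP.
case: (eqVneq N set0) => [->|hN]; last by rewrite sum_share_in.
by rewrite big_set0.
Qed.

Definition Mpick n (A1 A2 A3 : {set 'I_n}) :=
  if A2 == A3 then A2 else if A3 == A1 then A3 else A1.

Definition pshare (R : realType) n (j : 'I_n) (X Y : {set 'I_n}) : R :=
  if X == Y then share R j X else 0.

Lemma pick_le (R : realType) n (A1 A2 A3 : {set 'I_n}) j :
  [/\ pshare R j A2 A3 <= share R j (Mpick A1 A2 A3),
      pshare R j A3 A1 <= share R j (Mpick A1 A2 A3) &
      pshare R j A1 A2 <= share R j (Mpick A1 A2 A3)].
Proof.
rewrite /pshare /Mpick.
case: (eqVneq A2 A3) => [<-|n23]; case: (eqVneq A3 A1) => [e31|n31];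
  case: (eqVneq A1 A2) => [e12|n12]; rewrite ?e31 ?e12 ?eqxx /=;
  split; rewrite ?share_ge0 //; try by [].
Qed.

Definition pp n (a1 a2 a3 : 'I_n) (P1 P2 : pred 'I_n) (j : 'I_n) :=
  if P1 j then a2 else if P2 j then a3 else a1.
Definition qq n (a1 a2 a3 : 'I_n) (P1 P2 : pred 'I_n) (j : 'I_n) :=
  if P1 j then a3 else if P2 j then a1 else a2.

Definition base (R : realType) n (a1 a2 a3 : 'I_n) (P1 P2 : pred 'I_n)
  (m : profile n) (j : 'I_n) : R :=
  pshare R j (m (pp a1 a2 a3 P1 P2 j)) (m (qq a1 a2 a3 P1 P2 j)).

Lemma base_le (R : realType) n a1 a2 a3 P1 P2 (m : profile n) j :
  base R a1 a2 a3 P1 P2 m j <= share R j (Mpick (m a1) (m a2) (m a3)).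
Proof.
have [h1 h2 h3] := pick_le R (m a1) (m a2) (m a3) j.
by rewrite /base /pp /qq; case: (P1 j); case: (P2 j).
Qed.

Lemma base_ge0 (R : realType) n a1 a2 a3 P1 P2 (m : profile n) j :
  0 <= base R a1 a2 a3 P1 P2 m j.
Proof. by rewrite /base /pshare; case: ifP => _; rewrite ?share_ge0. Qed.

Lemma base_sum (R : realType) n a1 a2 a3 P1 P2 (m : profile n) :
  \sum_j base R a1 a2 a3 P1 P2 m j <= 1.
Proof.
apply: le_trans (sum_share_all R (Mpick (m a1) (m a2) (m a3))).
by apply: ler_sum => j _; apply: base_le.
Qed.

Lemma base_le1 (R : realType) n a1 a2 a3 P1 P2 (m : profile n) j :
  base R a1 a2 a3 P1 P2 m j <= 1.
Proof. apply: le_trans (base_le _ _ _ _ _ _ _ _) _; exact: share_le1. Qed.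

Lemma base_truth (R : realType) n a1 a2 a3 P1 P2 (N : {set 'I_n}) j :
  base R a1 a2 a3 P1 P2 [ffun _ => N] j = share R j N.
Proof. by rewrite /base !ffunE /pshare eqxx. Qed.

Lemma base_dev (R : realType) n a1 a2 a3 P1 P2 (m : profile n) i mi j :
  pp a1 a2 a3 P1 P2 j != i -> qq a1 a2 a3 P1 P2 j != i ->
  base R a1 a2 a3 P1 P2 (deviate m i mi) j = base R a1 a2 a3 P1 P2 m j.
Proof. by move=> hp hq; rewrite /base /deviate !ffunE (negbTE hp) (negbTE hq). Qed.

Lemma wpref_eq (R : realType) n (wf we : R) (G : network n) i (p p' : 'I_n -> R) :
  p' i = p i ->
  \sum_(j in friends G i) p' j = \sum_(j in friends G i) p j ->
  \sum_(j in enemies G i) p' j = \sum_(j in enemies G i) p j ->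
  wpref wf we G i p p'.
Proof.
move=> e1 e2 e3; rewrite /wpref /spref => -[|[_]]; first by rewrite e1 ltxx.
by rewrite !sumrB e2 e3 !subrr !mulr0 subrr ltxx.
Qed.

Lemma mech3 (R : realType) (wf we : R) n (G : network n) :
  connect_sym (EF_edge G) ->
  forall a1 a2 a3 : 'I_n,
  [&& ~~ connect (EF_edge G) a1 a2, ~~ connect (EF_edge G) a2 a3 & ~~ connect (EF_edge G) a1 a3] ->
  exists g : mechanism R n, valid g /\ efficient g /\ DSIC wf we G g.
Proof.
move=> cs a1 a2 a3 /and3P[n12 n23 n13].
set e := EF_edge G in cs n12 n23 n13 *.
pose P1 : pred 'I_n := connect e a1.
pose P2 : pred 'I_n := connect e a2.
exists (base R a1 a2 a3 P1 P2); split; [split|split].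
- by move=> m j; rewrite base_ge0 base_le1.
- by move=> m; apply: base_sum.
- move=> N hN; rewrite (eq_bigr (fun j => share R j N)); last by move=> j _; rewrite base_truth.
  exact: sum_share_in.
have tr : forall x y z, connect e x z -> connect e y z -> connect e x y.
  by move=> x y z hxz hyz; apply: connect_trans hxz _; rewrite cs.
have key : forall i j, connect e i j -> pp a1 a2 a3 P1 P2 j != i /\ qq a1 a2 a3 P1 P2 j != i.
  move=> i j hij; rewrite /pp /qq /P1 /P2.
  case h1: (connect e a1 j).
    split; apply/eqP => h; subst i.
    - by move: n12; rewrite (tr _ _ _ h1 hij).
    - by move: n13; rewrite (tr _ _ _ h1 hij).
  case h2: (connect e a2 j).
    split; apply/eqP => h; subst i.
    - by move: n23; rewrite cs (tr _ _ _ hij h2).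
    - by rewrite h1 in hij.
  by split; apply/eqP => h; subst i; [rewrite h1 in hij | rewrite h2 in hij].
move=> i m mi; apply: wpref_eq.
- by have [k1 k2] := key i i (connect0 _ _); rewrite base_dev.
- apply: eq_bigr => j; rewrite inE => /andP[ji hj].
  have hij : connect e i j by apply: connect1; rewrite /e /EF_edge eq_sym ji hj.
  by have [k1 k2] := key i j hij; rewrite base_dev.
- apply: eq_bigr => j; rewrite inE => /andP[ji hj].
  have hij : connect e i j by apply: connect1; rewrite /e /EF_edge eq_sym ji hj orbT.
  by have [k1 k2] := key i j hij; rewrite base_dev.
Qed.

Lemma sum_share_all_eq (R : realType) n (N : {set 'I_n}) : N != set0 ->
  \sum_j share R j N = 1.
Proof.
move=> hN; rewrite -(sum_share_in R hN) [RHS]big_mkcond /=.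
by apply: eq_bigr => j _; rewrite /share; case: ifP.
Qed.

Lemma mechF (R : realType) (wf we : R) n (G : network n) :
  (4 <= n)%N -> (forall x y : 'I_n, x != y -> G x y = Friends) ->
  exists g : mechanism R n, valid g /\ efficient g /\ DSIC wf we G g.
Proof.
move=> hn hF.
have h0 : (0 < n)%N by apply: leq_trans hn.
have h1 : (1 < n)%N by apply: leq_trans hn.
have h2 : (2 < n)%N by apply: leq_trans hn.
have h3 : (3 < n)%N by [].
pose a1 := Ordinal h0. pose a2 := Ordinal h1. pose a3 := Ordinal h2. pose a4 := Ordinal h3.
pose P1 : pred 'I_n := pred1 a1.
pose P2 : pred 'I_n := pred1 a2.
pose b := base R a1 a2 a3 P1 P2.
pose g : mechanism R n := fun m j => if j == a4 then b m j + (1 - \sum_k b m k) else b m j.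
have btot : forall m, \sum_k b m k = b m a4 + \sum_(k | k != a4) b m k.
  by move=> m; rewrite (bigD1 a4).
have gtot : forall m, \sum_k g m k = 1.
  move=> m; rewrite (bigD1 a4) //= /g eqxx.
  rewrite (eq_bigr (fun k => b m k)); last by move=> k /negbTE ->.
  by rewrite btot; lra.
have rest0 : forall m, 0 <= \sum_(k | k != a4) b m k.
  by move=> m; apply: sumr_ge0 => k _; apply: base_ge0.
have bs := base_sum R a1 a2 a3 P1 P2.
have fr : forall i, friends G i = [set j | j != i].
  by move=> i; apply/setP => j; rewrite !inE; case: (eqVneq j i) => //= ji; rewrite hF // eq_sym.
have en : forall i, enemies G i = set0.
  by move=> i; apply/setP => j; rewrite !inE; case: (eqVneq j i) => //= ji; rewrite hF // eq_sym.
have sfr : forall m i, \sum_(j in friends G i) g m j = 1 - g m i.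
  move=> m i; rewrite fr; apply/eqP; rewrite eq_sym subr_eq -(gtot m) (bigD1 i) //=.
  by rewrite addrC; apply/eqP; congr (_ + _); apply: eq_bigl => k; rewrite inE.
have ppne : forall j, pp a1 a2 a3 P1 P2 j != j /\ qq a1 a2 a3 P1 P2 j != j.
  move=> j; rewrite /pp /qq /P1 /P2 /=.
  case: (eqVneq j a1) => [->|j1] /=; first by [].
  case: (eqVneq j a2) => [->|j2] /=; first by [].
  by rewrite !(eq_sym _ j) j1 j2.
have ppin : forall j, pp a1 a2 a3 P1 P2 j != a4 /\ qq a1 a2 a3 P1 P2 j != a4.
  by move=> j; rewrite /pp /qq; case: (P1 j); case: (P2 j).
exists g; split; [split|split].
- move=> m j; rewrite /g; case: ifP => [/eqP ->|_].
    have hb1 : \sum_k b m k <= 1 by apply: bs.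
    have hb0 : 0 <= b m a4 by apply: base_ge0.
    have hr := rest0 m.
    rewrite btot in hb1 *; apply/andP; split; lra.
  by rewrite base_ge0 base_le1.
- by move=> m; rewrite gtot.
- move=> N hN.
  have bT : forall j, b [ffun _ => N] j = share R j N by move=> j; rewrite /b base_truth.
  have gT : forall j, g [ffun _ => N] j = share R j N.
    move=> j; rewrite /g (eq_bigr _ (fun k _ => bT k)) sum_share_all_eq // bT.
    by case: ifP => _; rewrite ?subrr ?addr0.
  rewrite (eq_bigr _ (fun k _ => gT k)); exact: sum_share_in.
move=> i m mi.
have gi : g (deviate m i mi) i = g m i.
  rewrite /g; case: (eqVneq i a4) => [ei|ni].
    have bk : forall k, b (deviate m i mi) k = b m k.
      move=> k; have [p1 p2] := ppin k; rewrite /b base_dev // ei //.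
    by rewrite !bk (eq_bigr _ (fun k _ => bk k)).
  by have [p1 p2] := ppne i; rewrite /b base_dev.
apply: wpref_eq => //.
- by rewrite !sfr gi.
- by rewrite en !big_set0.
Qed.

Lemma Fconn_friend n (G : network n) : net_symmetric G -> structurally_balanced G ->
  forall x y, connect (F_edge G) x y -> x != y -> G x y = Friends.
Proof.
move=> hs hb x y hc yx.
have : y \in Kset G x.
  apply: (@connect_ind' _ _ (fun v => v \in Kset G x)) hc; first exact: a_in_K.
  move=> u v /andP[uv huv]; rewrite !inK.
  case: (eqVneq v x) => [//|vx] /=.
  case: (eqVneq u x) => [eux|ux] /=; first by rewrite -eux.
  move=> hu; rewrite -(friend_same hs hb (nsym ux) vx (nsym uv) (is_friendP hu)).
  exact: huv.
by rewrite inK (negbTE (nsym yx)) /= => /is_friendP.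
Qed.

Unset Implicit Arguments.

Theorem theorem5 (R : realType) (wf we : R) (n : nat) (G : network n) :
  0 < wf -> 0 < we -> (4 <= n)%N ->
  net_symmetric G -> structurally_balanced G ->
  (exists g : mechanism R n, valid g /\ efficient g /\ DSIC wf we G g) <->
  (num_F_components G = 1%N \/ (3 <= num_EF_components G)%N).
Proof.
move=> hwf hwe hn hs hb.
have h0 : (0 < n)%N by apply: leq_trans hn.
have csym := sym_connect_sym (EF_sym hs).
split.
- move=> [g [hv [he hD]]].
  case: (eqVneq (num_F_components G) 1%N) => [->|nF]; first by left.
  case: (leqP 3 (num_EF_components G)) => [h3|h2]; first by right.
  exfalso.
  have : ~~ [forall x, forall y, connect (F_edge G) x y].
    apply/negP => /forallP h; move/eqP: nF; apply.
    apply: (C2 (Ordinal h0)) => x y; exact: (forallP (h x) y).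
  rewrite negb_forall => /existsP[a]; rewrite negb_forall => /existsP[d] nad.
  have ad : a != d by apply/negP => /eqP e; rewrite e connect0 in nad.
  have nf : ~~ is_friend (G a d).
    by apply/negP => f; rewrite connect1 // /F_edge ad f in nad.
  case: (boolP [forall x, connect (EF_edge G) a x]) => hall.
    apply: (impossibility hwf hwe hs hb hv he hD (a := a) (d := d)); right.
    split; last by move=> x; exact: (forallP hall x).
    have := connect_KE hs hb (forallP hall d).
    by rewrite in_setU inK (negbTE (nsym ad)) /= (negbTE nf).
  move: hall; rewrite negb_forall => /existsP[x nx].
  apply: (impossibility hwf hwe hs hb hv he hD (a := a) (d := x)); left.
  split=> // y.
  have := C3 h2 a y x; rewrite (negbTE nx) orbF.
  by case/orP => [->//|]; rewrite csym => ->; rewrite orbT.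
- case=> [h1|h3].
    apply: mechF => // x y xy; apply: Fconn_friend => //; exact: C1.
  have [a1 [a2 [a3 h]]] := C4 csym h3.
  exact: mech3 csym a1 a2 a3 h.
Qed.
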